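(* Let $H$ be a countably infinite group. Then the set $D(H)=D_L(H)\cap D_R(H)$ is non-empty and $H$-bi-invariant.
   Context: $2^H$ denotes the set of all subsets of $H$ with the product topology (pointwise convergence of characteristic functions). $H$ acts on $2^H$ by left multiplication $S\mapsto hS$ (the left action) and by right multiplication $S\mapsto Sh$ (the right action). $D_L(H)$ (resp. $D_R(H)$) is the set of $S\subseteq H$ whose orbit under the left (resp. right) action, $\{hS:h\in H\}$ (resp. $\{Sh:h\in H\}$), is dense in $2^H$. A subset of $2^H$ is $H$-bi-invariant if it is invariant under both the left and the right action. *)

(* Defs.v *)
From HB Require Import structures.
From mathcomp Require Import all_boot all_order all_algebra.
From mathcomp Require Import all_classical all_reals all_analysis.
Set Implicit Arguments. Unset Strict Implicit. Unset Printing Implicit Defensive.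
Local Open Scope classical_set_scope.

Definition group_axioms (H : Type) (mul : H -> H -> H) (e : H) (inv : H -> H) : Prop :=
  [/\ (forall x y z, mul x (mul y z) = mul (mul x y) z),
      (forall x, mul e x = x), (forall x, mul x e = x),
      (forall x, mul (inv x) x = e) & (forall x, mul x (inv x) = e)].

(* 2^H : subsets of H as characteristic functions, with the product topology
   (pointwise convergence), bool being discrete. *)
Definition pow2 (H : Type) := {ptws H -> bool}.

Definition lact (H : Type) (mul : H -> H -> H) (h : H) (S : pow2 H) : pow2 H :=
  fun x => `[< exists s, S s /\ x = mul h s >].
Definition ract (H : Type) (mul : H -> H -> H) (h : H) (S : pow2 H) : pow2 H :=
  fun x => `[< exists s, S s /\ x = mul s h >].

Definition D_L (H : Type) (mul : H -> H -> H) : set (pow2 H) :=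
  [set S | dense (range (fun h => lact mul h S))].
Definition D_R (H : Type) (mul : H -> H -> H) : set (pow2 H) :=
  [set S | dense (range (fun h => ract mul h S))].
Definition D (H : Type) (mul : H -> H -> H) : set (pow2 H) := D_L mul `&` D_R mul.

Definition bi_invariant (H : Type) (mul : H -> H -> H) (X : set (pow2 H)) : Prop :=
  forall h S, X S -> X (lact mul h S) /\ X (ract mul h S).

(* Main.v *)
Require Import Defs.
From HB Require Import structures.
From mathcomp Require Import all_boot all_order all_algebra.
From mathcomp Require Import all_classical all_reals all_analysis.
From mathcomp Require Import zify.
Local Open Scope classical_set_scope.
Set Implicit Arguments.
From Stdlib Require List.
Lemma nbhs_eval (H : Type) (T : pow2 H) (x : H) :
  nbhs T [set g : pow2 H | g x = T x].
Proof.
have h : (nbhs T) --> T by apply: cvg_id.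
move: h => /cvg_sup.
move=> /(_ x).
apply.
apply: open_nbhs_nbhs; split => //.
exists [set T x] => //.
exact: discrete_open.
Qed.

Definition cyl (H : Type) (T : pow2 H) (F : seq H) : set (pow2 H) :=
  [set g | forall x, List.In x F -> g x = T x].

Lemma nbhs_cyl (H : Type) (T : pow2 H) (A : set (pow2 H)) :
  nbhs T A -> exists F, cyl T F `<=` A.
Proof.
pose G := filter_from [set: seq H] (cyl T).
have FG : Filter G.
  apply: filter_from_filter; first by exists [::].
  move=> F1 F2 _ _; exists (F1 ++ F2) => // g Hg; split => x Hx; apply: Hg;
    apply: List.in_or_app; tauto.
have : G --> T.
  apply/cvg_sup => i B.
  rewrite nbhsE => -[W [oW WT] WB].
  move: oW => [V oV VW].
  exists [:: i] => // g Hg; apply: WB; rewrite -VW /=.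
  have -> : g i = T i by apply: Hg; left.
  by move: WT; rewrite -VW.
move=> /(_ A) h /h [F _ HF]; by exists F.
Qed.
Lemma nbhs_cyl_self (H : Type) (T : pow2 H) (F : seq H) : nbhs T (cyl T F).
Proof.
elim: F => [|a F IH].
  have -> : cyl T [::] = setT by rewrite /cyl; apply/seteqP; split => g // _ x [].
  exact: filterT.
apply: filterS; last exact: (filterI (nbhs_eval T a) IH).
by move=> g [ga gF] x [<-|/gF].
Qed.

Lemma dense_cyl (H : Type) (Y : set (pow2 H)) :
  dense Y <-> forall F (P : pow2 H), exists T, Y T /\ cyl P F T.
Proof.
split.
  move=> dY F P.
  have ne : cyl P F !=set0 by exists P.
  have o : open (cyl P F).
    rewrite openE => T CT; rewrite /interior /=.
    apply: filterS; last exact: (nbhs_cyl_self T F).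
    move=> g Hg x Hx.
    by rewrite Hg // CT.
  have [T [CT YT]] := dY _ ne o.
  by exists T.
move=> HY O [T0 OT0] oO.
have [F HF] := nbhs_cyl (open_nbhs_nbhs (conj oO OT0)).
have [T [YT CT]] := HY F T0.
by exists T; split => //; apply: HF.
Qed.
Lemma grp_inv_uniq (H : Type) (mul : H -> H -> H) (e : H) (inv : H -> H) :
  group_axioms mul e inv -> forall a y, mul y a = e -> y = inv a.
Proof.
case=> A el er il ir a y hy.
by rewrite -[y]er -(ir a) A hy el.
Qed.

Lemma grp_inv_mul (H : Type) (mul : H -> H -> H) (e : H) (inv : H -> H) :
  group_axioms mul e inv -> forall a b, inv (mul a b) = mul (inv b) (inv a).
Proof.
move=> G a b; symmetry; apply: (grp_inv_uniq G).
case: G => A el er il ir.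
by rewrite -A (A (inv a)) il el il.
Qed.

Lemma grp_inv_inv (H : Type) (mul : H -> H -> H) (e : H) (inv : H -> H) :
  group_axioms mul e inv -> forall a, inv (inv a) = a.
Proof.
move=> G a; symmetry; apply: (grp_inv_uniq G); by case: G.
Qed.

Lemma lactE (H : Type) (mul : H -> H -> H) (e : H) (inv : H -> H) :
  group_axioms mul e inv -> forall h S x, lact mul h S x = S (mul (inv h) x).
Proof.
case=> A el er il ir h S x; rewrite /lact.
apply/asboolP/idP => [[s [Ss ->]]|Sx]; first by rewrite A il el.
by exists (mul (inv h) x); rewrite A ir el.
Qed.

Lemma ractE (H : Type) (mul : H -> H -> H) (e : H) (inv : H -> H) :
  group_axioms mul e inv -> forall h S x, ract mul h S x = S (mul x (inv h)).
Proof.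
case=> A el er il ir h S x; rewrite /ract.
apply/asboolP/idP => [[s [Ss ->]]|Sx]; first by rewrite -A ir er.
by exists (mul x (inv h)); rewrite -A il er.
Qed.

Definition Lpat (H : Type) (mul : H -> H -> H) (inv : H -> H) (S : pow2 H) :=
  forall (F : seq H) (P : pow2 H), exists h,
    forall x, List.In x F -> S (mul (inv h) x) = P x.
Definition Rpat (H : Type) (mul : H -> H -> H) (inv : H -> H) (S : pow2 H) :=
  forall (F : seq H) (P : pow2 H), exists h,
    forall x, List.In x F -> S (mul x (inv h)) = P x.

Lemma DL_iff (H : Type) (mul : H -> H -> H) (e : H) (inv : H -> H) :
  group_axioms mul e inv -> forall S, D_L mul S <-> Lpat mul inv S.
Proof.
move=> G S; rewrite /D_L /=; apply: iff_trans (dense_cyl _) _; split.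
  move=> HD F P; have [T [[h _ <-] CT]] := HD F P.
  by exists h => x Hx; rewrite -(lactE G); exact: CT.
move=> HL F P; have [h Hh] := HL F P; exists (lact mul h S); split.
  by exists h.
by move=> x Hx; rewrite (lactE G); exact: Hh.
Qed.

Lemma DR_iff (H : Type) (mul : H -> H -> H) (e : H) (inv : H -> H) :
  group_axioms mul e inv -> forall S, D_R mul S <-> Rpat mul inv S.
Proof.
move=> G S; rewrite /D_R /=; apply: iff_trans (dense_cyl _) _; split.
  move=> HD F P; have [T [[h _ <-] CT]] := HD F P.
  by exists h => x Hx; rewrite -(ractE G); exact: CT.
move=> HL F P; have [h Hh] := HL F P; exists (ract mul h S); split.
  by exists h.
by move=> x Hx; rewrite (ractE G); exact: Hh.
Qed.

Lemma Lpat_l (H : Type) (mul : H -> H -> H) (e : H) (inv : H -> H) :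
  group_axioms mul e inv -> forall g S, Lpat mul inv S -> Lpat mul inv (lact mul g S).
Proof.
move=> G g S HL F P; have [h Hh] := HL F P.
exists (mul h (inv g)) => x Hx; rewrite (lactE G) (grp_inv_mul G) (grp_inv_inv G).
case: (G) => A el er il ir.
by rewrite -A A il el; exact: Hh.
Qed.

Lemma Lpat_r (H : Type) (mul : H -> H -> H) (e : H) (inv : H -> H) :
  group_axioms mul e inv -> forall g S, Lpat mul inv S -> Lpat mul inv (ract mul g S).
Proof.
move=> G g S HL F P.
have [h Hh] := HL (List.map (fun x => mul x (inv g)) F) (fun y => P (mul y g)).
exists h => x Hx; rewrite (ractE G).
case: (G) => A el er il ir.
rewrite -A Hh; last by apply: List.in_map.
by rewrite -A il er.
Qed.

Lemma Rpat_l (H : Type) (mul : H -> H -> H) (e : H) (inv : H -> H) :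
  group_axioms mul e inv -> forall g S, Rpat mul inv S -> Rpat mul inv (lact mul g S).
Proof.
move=> G g S HL F P.
have [h Hh] := HL (List.map (fun x => mul (inv g) x) F) (fun y => P (mul g y)).
exists h => x Hx; rewrite (lactE G).
case: (G) => A el er il ir.
rewrite A Hh; last by apply: List.in_map.
by rewrite A ir el.
Qed.

Lemma Rpat_r (H : Type) (mul : H -> H -> H) (e : H) (inv : H -> H) :
  group_axioms mul e inv -> forall g S, Rpat mul inv S -> Rpat mul inv (ract mul g S).
Proof.
move=> G g S HL F P; have [h Hh] := HL F P.
exists (mul (inv g) h) => x Hx; rewrite (ractE G) (grp_inv_mul G) (grp_inv_inv G).
case: (G) => A el er il ir.
by rewrite -!A ir er; exact: Hh.
Qed.
Definition LB (H : Type) (mul : H -> H -> H) (inv : H -> H) (h : H) (Ys : list H) :=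
  List.map (fun y => mul (inv h) y) Ys.
Definition RB (H : Type) (mul : H -> H -> H) (inv : H -> H) (g : H) (Ys : list H) :=
  List.map (fun y => mul y (inv g)) Ys.

Fixpoint Useq (H : Type) (mul : H -> H -> H) (inv : H -> H) (Ys : nat -> list H)
  (lh rg : list H * list H -> H) (n : nat) : list H :=
  match n with
  | 0 => nil
  | S m => let u := Useq mul inv Ys lh rg m in
           let hm := lh (Ys m, u) in
           List.app u (List.app (LB mul inv hm (Ys m))
                        (RB mul inv (rg (Ys m, List.app u (LB mul inv hm (Ys m)))) (Ys m)))
  end.

Lemma bnd_lt (H : Type) (f : H -> nat) (L : list H) x :
  List.In x L -> (f x < foldr (fun y m => (f y).+1 + m) 0 L)%N.
Proof.
elim: L => [//|a L IH] /= [->|/IH]; lia.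
Qed.











Lemma exists_DLR (H : Type) (mul : H -> H -> H) (e : H) (inv : H -> H) :
  group_axioms mul e inv -> ([set: H] #= [set: nat])%card ->
  exists S : pow2 H, Lpat mul inv S /\ Rpat mul inv S.
Proof.
move=> G Hc.
have [f [_ finj fsurj]] := card_set_bijP Hc.
have /choice [en Hen] : forall n, exists x, f x = n.
  by move=> n; have [x _ <-] := fsurj n I; exists x.
have enK : forall x, en (f x) = x.
  by move=> x; apply: finj; rewrite ?inE //; exact: Hen.
pose bnd := fun L : list H => foldr (fun y m => (f y).+1 + m) 0 L.
have frsh : forall L : list H, exists h, ~ List.In h L.
  move=> L; exists (en (bnd L)) => /(bnd_lt f); by rewrite Hen /bnd ltnn.
case: (G) => A el er il ir.
have lfresh : forall p : list H * list H, exists h,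
    forall y, List.In y p.1 -> ~ List.In (mul (inv h) y) p.2.
  move=> [Ys U].
  have [h Hh] := frsh (List.flat_map (fun y => List.map (fun u => mul y (inv u)) U) Ys).
  exists h => y /= Hy Hu; apply: Hh; apply/List.in_flat_map; exists y; split => //.
  apply/List.in_map_iff; exists (mul (inv h) y); split => //.
  by rewrite (grp_inv_mul G) (grp_inv_inv G) A ir el.
have rfresh : forall p : list H * list H, exists g,
    forall y, List.In y p.1 -> ~ List.In (mul y (inv g)) p.2.
  move=> [Ys U].
  have [h Hh] := frsh (List.flat_map (fun y => List.map (fun u => mul (inv u) y) U) Ys).
  exists h => y /= Hy Hu; apply: Hh; apply/List.in_flat_map; exists y; split => //.
  apply/List.in_map_iff; exists (mul y (inv h)); split => //.
  by rewrite (grp_inv_mul G) (grp_inv_inv G) -A il er.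
have /choice [lh Hlh] := lfresh.
have /choice [rg Hrg] := rfresh.
pose bs := fun n => odflt [::] (@unpickle (seq bool) n).
pose Ys := fun n => List.map en (List.seq 0 (size (bs n))).
pose U := Useq mul inv Ys lh rg.
pose h := fun n => lh (Ys n, U n).
pose g := fun n => rg (Ys n, List.app (U n) (LB mul inv (h n) (Ys n))).
have US : forall n, U n.+1 = List.app (U n) (List.app (LB mul inv (h n) (Ys n)) (RB mul inv (g n) (Ys n))) by [].
have Umono : forall m n, (m <= n)%N -> forall x, List.In x (U m) -> List.In x (U n).
  move=> m n /subnK <-; elim: (n - m)%N => [//|k IH] x /IH.
  by rewrite addSn US => ?; apply/List.in_app_iff; left.
have N1 : forall n y, List.In y (Ys n) -> ~ List.In (mul (inv (h n)) y) (U n).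
  by move=> n y; apply: (Hlh (Ys n, U n)).
have N2 : forall n y, List.In y (Ys n) ->
    ~ List.In (mul y (inv (g n))) (List.app (U n) (LB mul inv (h n) (Ys n))).
  by move=> n y; apply: (Hrg (Ys n, _)).
pose blk := fun n x => List.In x (U n.+1) /\ ~ List.In x (U n).
have blk_eq : forall m n x, blk m x -> blk n x -> m = n.
  move=> m n x [Hm Nm] [Hn Nn]; case: (ltngtP m n) => // mn.
    by case: Nn; apply: Umono Hm.
  by case: Nm; apply: Umono Hn.
have blkL : forall n y, List.In y (Ys n) -> blk n (mul (inv (h n)) y).
  move=> n y Hy; split; last exact: N1.
  rewrite US; apply/List.in_app_iff; right; apply/List.in_app_iff; left.
  by apply/List.in_map_iff; exists y.
have blkR : forall n y, List.In y (Ys n) -> blk n (mul y (inv (g n))).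
  move=> n y Hy; split; last by move=> H1; apply: (N2 n y Hy); apply/List.in_app_iff; left.
  rewrite US; apply/List.in_app_iff; right; apply/List.in_app_iff; right.
  by apply/List.in_map_iff; exists y.
have LBin : forall n y, List.In y (Ys n) -> List.In (mul (inv (h n)) y) (List.app (U n) (LB mul inv (h n) (Ys n))).
  by move=> n y Hy; apply/List.in_app_iff; right; apply/List.in_map_iff; exists y.
have lcanc : forall a y z, mul a y = mul a z -> y = z.
  by move=> a y z E; rewrite -(el y) -(il a) -A E A il el.
have rcanc : forall a y z, mul y a = mul z a -> y = z.
  by move=> a y z E; rewrite -(er y) -(ir a) A E -A ir er.
pose S : pow2 H := fun x => `[< exists n y, List.In y (Ys n) /\
   nth false (bs n) (f y) /\ (x = mul (inv (h n)) y \/ x = mul y (inv (g n))) >].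
have SL : forall n y, List.In y (Ys n) -> S (mul (inv (h n)) y) = nth false (bs n) (f y).
  move=> n y Hy; apply/asboolP/idP => [[m [z [Hz [Hv Heq]]]]|Hv]; last first.
    by exists n, y; split => //; split => //; left.
  have mn : m = n.
    apply: (blk_eq _ _ (mul (inv (h n)) y)); last exact: blkL.
    by case: Heq => ->; [apply: blkL | apply: blkR].
  subst m; case: Heq => [/lcanc -> //|E].
  by case: (N2 n z Hz); rewrite -E; apply: LBin.
have SR : forall n y, List.In y (Ys n) -> S (mul y (inv (g n))) = nth false (bs n) (f y).
  move=> n y Hy; apply/asboolP/idP => [[m [z [Hz [Hv Heq]]]]|Hv]; last first.
    by exists n, y; split => //; split => //; right.
  have mn : m = n.
    apply: (blk_eq _ _ (mul y (inv (g n)))); last exact: blkR.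
    by case: Heq => ->; [apply: blkL | apply: blkR].
  subst m; case: Heq => [E|/rcanc -> //].
  by case: (N2 n y Hy); rewrite E; apply: LBin.
have pat : forall (F : seq H) (P : pow2 H), exists n, forall x, List.In x F ->
    List.In x (Ys n) /\ nth false (bs n) (f x) = P x.
  move=> F P; pose b := [seq P (en i) | i <- iota 0 (bnd F)].
  exists (pickle b) => x Hx.
  have Hb : bs (pickle b) = b by rewrite /bs pickleK.
  have fx : (f x < bnd F)%N by exact: bnd_lt.
  split.
    rewrite /Ys Hb size_map size_iota; apply/List.in_map_iff; exists (f x); split => //.
    apply/List.in_seq; lia.
  rewrite Hb (nth_map 0%N); last by rewrite size_iota.
  by rewrite nth_iota // add0n enK.
exists S; split.
  move=> F P; have [n Hn] := pat F P; exists (h n) => x Hx.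
  by have [Hy <-] := Hn x Hx; apply: SL.
move=> F P; have [n Hn] := pat F P; exists (g n) => x Hx.
by have [Hy <-] := Hn x Hx; apply: SR.
Qed.

Unset Implicit Arguments.

Theorem proposition3p2 (H : Type) (mul : H -> H -> H) (e : H) (inv : H -> H) :
  group_axioms mul e inv ->
  ([set: H] #= [set: nat])%card ->
  D mul !=set0 /\ bi_invariant mul (D mul).
Proof.
move=> G Hc; split.
  have [S [HL HR]] := exists_DLR G Hc.
  by exists S; split; [apply/(DL_iff G) | apply/(DR_iff G)].
move=> h S [/(DL_iff G) HL /(DR_iff G) HR]; split; split.
- by apply/(DL_iff G); apply: (Lpat_l G).
- by apply/(DR_iff G); apply: (Rpat_l G).
- by apply/(DL_iff G); apply: (Lpat_r G).
- by apply/(DR_iff G); apply: (Rpat_r G).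
Qed.
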